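(* Let $\kappa\ge 1$ and $n\ge 1$ be integers, let $0\le\epsilon<1$, and let $q=(q_0,\dots,q_{2^\kappa-1})\in\mathbb{R}^{2^\kappa}$ satisfy $q_i\ge 0$ for all $i$ and $\sum_{i=0}^{2^\kappa-1}q_i=1$. Then for every subspace $S$ of $W=\mathbb{F}_2^\kappa$, $\psi(S,n,\epsilon,q)\ge 0$.
   Context: $W=\mathbb{F}_2^\kappa$. For $i\in\{0,\dots,2^\kappa-1\}$, $\nu(i)\in W$ denotes the binary expansion of $i$. For a subspace $S\subseteq W$ and $q\in\mathbb{R}^{2^\kappa}$ (indexed from $0$), $\zeta(S,q)=\sum_{i:\nu(i)\in S}q_i$. For a subspace $S$ and integer $d$, $\Xi(S,d)$ is the set of all $d$-dimensional subspaces of $S$. Define $\phi(S,n,\epsilon,q)=\epsilon^{n(1-\zeta(S,q))}$ (with the convention $0^0=1$), and define $\psi$ recursively on the dimension $d$ of $S$ by $\psi(S,n,\epsilon,q)=\phi(S,n,\epsilon,q)-\sum_{i=0}^{d-1}\sum_{T\in\Xi(S,i)}\psi(T,n,\epsilon,q)$ (so for $d=0$, $\psi(\{0\})=\phi(\{0\})$). *)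

(* Defs.v *)
From HB Require Import structures.
From mathcomp Require Import all_boot all_order all_algebra.
From mathcomp Require Import reals exp.
Set Implicit Arguments. Unset Strict Implicit. Unset Printing Implicit Defensive.
Import Order.TTheory GRing.Theory Num.Theory.
Local Open Scope ring_scope.

Notation W k := 'rV['F_2]_k.

(* Subspaces of W are represented as finite sets that equal their own span;
   this makes "the set of all subspaces" a finite type to sum over. *)
Definition span_of k (A : {set W k}) : {vspace W k} := <<enum A>>%VS.
Definition is_subspace k (A : {set W k}) : bool :=
  [set x | x \in span_of A] == A.
Definition sdim k (A : {set W k}) : nat := \dim (span_of A).

(* nu(i) : binary expansion of i; coordinate j is bit j of i (least significant first). *)
Definition nu k (i : nat) : W k := \row_(j < k) ((odd (i %/ 2 ^ j))%:R : 'F_2).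

Section Psi.
Variables (R : realType) (k : nat) (n : nat) (eps : R) (q : 'I_(2 ^ k) -> R).

Definition zeta (S : {set W k}) : R := \sum_(i < 2 ^ k | nu k i \in S) q i.

(* phi = eps^(n (1 - zeta)); powR has 0 `^ 0 = 1. *)
Definition phi (S : {set W k}) : R := powR eps (n%:R * (1 - zeta S)).

(* psi with a fuel argument; psi S uses fuel sdim S, which suffices since every
   recursive call is on a subspace of strictly smaller dimension. *)
Fixpoint psi_fuel (f : nat) (S : {set W k}) : R :=
  match f with
  | 0 => phi S
  | f'.+1 => phi S - \sum_(i < sdim S)
                \sum_(T : {set W k} | is_subspace T && (sdim T == i) && (T \subset S))
                   psi_fuel f' T
  end.

Definition psi (S : {set W k}) : R := psi_fuel (sdim S) S.
End Psi.

(* Main.v *)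
Require Import Defs.
From HB Require Import structures.
From mathcomp Require Import all_boot all_order all_algebra.
From mathcomp Require Import reals exp.
Import Order.TTheory GRing.Theory Num.Theory.
Set Implicit Arguments. Unset Strict Implicit.
Local Open Scope ring_scope.

Definition cl k (Y : {set 'rV['F_2]_k}) : {set 'rV['F_2]_k} :=
  [set x | x \in span_of Y].

Lemma span_cl k (Y : {set 'rV['F_2]_k}) : span_of (cl Y) = span_of Y.
Proof.
apply/subv_anti/andP; split; apply/span_subvP => x.
- by rewrite mem_enum inE.
- rewrite mem_enum => xY; apply: memv_span; rewrite mem_enum inE.
  by apply: memv_span; rewrite mem_enum.
Qed.

Lemma cl_subspace k (Y : {set 'rV['F_2]_k}) : is_subspace (cl Y).
Proof. by rewrite /is_subspace span_cl. Qed.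

Lemma sub_cl k (Y : {set 'rV['F_2]_k}) : Y \subset cl Y.
Proof. by apply/subsetP => x xY; rewrite inE; apply: memv_span; rewrite mem_enum. Qed.

Lemma cl_sub k (T Y : {set 'rV['F_2]_k}) : is_subspace T ->
  (cl Y \subset T) = (Y \subset T).
Proof.
move=> /eqP HT; apply/idP/idP => [|YT]; first exact: subset_trans (sub_cl Y).
rewrite -HT; apply/subsetP => x; rewrite !inE; apply/subvP/sub_span => y.
by rewrite !mem_enum; apply/subsetP.
Qed.

Lemma sdim_lt k (U T : {set 'rV['F_2]_k}) : is_subspace U -> is_subspace T ->
  U \subset T -> (U != T) = (sdim U < sdim T)%N.
Proof.
move=> sU sT UT.
have sub : (span_of U <= span_of T)%VS.
  by apply: sub_span => y; rewrite !mem_enum; apply/subsetP.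
rewrite /sdim (ltn_leqif (dimv_leqif_eq sub)); congr (~~ _).
apply/eqP/eqP => [->//|e]; move/eqP: sU => <-; move/eqP: sT => <-.
by rewrite e.
Qed.

Lemma powRD2 (R : realType) (x r s : R) : 0 <= r -> 0 <= s ->
  x `^ (r + s) = x `^ r * x `^ s.
Proof.
move=> r0 s0; case: (eqVneq (r + s) 0) => [rs0|rsn0].
  move/eqP: rs0; rewrite paddr_eq0 // => /andP[/eqP -> /eqP ->].
  by rewrite addr0 powRr0 mulr1.
by apply: powRD; rewrite (negPf rsn0).
Qed.

Lemma powR_sum (R : realType) (x : R) (I : finType) (P : pred I) (F : I -> R) :
  (forall i, P i -> 0 <= F i) ->
  x `^ (\sum_(i | P i) F i) = \prod_(i | P i) x `^ F i.
Proof.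
move=> H.
suff [] : 0 <= \sum_(i | P i) F i /\ x `^ (\sum_(i | P i) F i) = \prod_(i | P i) x `^ F i by [].
apply: (big_rec2 (fun s p => 0 <= s /\ x `^ s = p)); first by rewrite powRr0.
move=> i s p Pi [s0 <-]; split; first by rewrite addr_ge0 // H.
by rewrite powRD2 // H.
Qed.

Lemma sum_ord_dim (R : realType) (X : finType) (m : nat) (A B : pred X)
  (d : X -> nat) (F : X -> R) :
  \sum_(i < m) \sum_(U | A U && (d U == i) && B U) F U =
  \sum_(U | A U && B U && (d U < m)%N) F U.
Proof.
under eq_bigr => i _ do rewrite big_mkcond.
rewrite [RHS]big_mkcond.
rewrite exchange_big /=; apply: eq_bigr => U _.
case: (A U); last by rewrite /= big1.
case: (B U); last by rewrite /= big1 // => i; rewrite andbF.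
rewrite /=; under eq_bigr do rewrite andbT.
case: ltnP => h.
  rewrite (bigD1 (Ordinal h)) //= eqxx big1 ?addr0 // => j hj.
  rewrite ifN //; apply: contra hj => /eqP e; apply/eqP/val_inj => /=.
  by rewrite -e.
by apply: big1 => j _; rewrite ifN //; apply/negP => /eqP e; have := ltn_ord j; rewrite -e ltnNge h.
Qed.

Section Main.
Variables (R : realType) (k n : nat) (eps : R) (q : 'I_(2 ^ k) -> R).
Hypotheses (eps0 : 0 <= eps) (eps1 : eps < 1) (q0 : forall i, 0 <= q i)
  (q1 : \sum_(i < 2 ^ k) q i = 1).

Definition a (x : 'rV['F_2]_k) : R :=
  eps `^ (n%:R * \sum_(i < 2 ^ k | nu k i == x) q i).
Definition w (Y : {set 'rV['F_2]_k}) : R :=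
  \prod_x (if x \in Y then 1 - a x else a x).
Definition g (U : {set 'rV['F_2]_k}) : R := \sum_(Y | cl Y == U) w Y.

Lemma a_ge0 x : 0 <= a x. Proof. exact: powR_ge0. Qed.
Lemma a_le1 x : a x <= 1.
Proof.
rewrite /a; set e := (n%:R * _).
have <- : (1:R) `^ e = 1 by rewrite powR1.
apply: ge0_ler_powR; rewrite ?nnegrE ?(ltW eps1) //.
by rewrite /e mulr_ge0 // sumr_ge0.
Qed.

Lemma w_ge0 Y : 0 <= w Y.
Proof.
apply: prodr_ge0 => x _; case: ifP => _; rewrite ?a_ge0 //.
by rewrite subr_ge0 a_le1.
Qed.

Lemma g_ge0 U : 0 <= g U.
Proof. by apply: sumr_ge0 => Y _; apply: w_ge0. Qed.

Lemma phi_prod T : phi n eps q T = \prod_(x in ~: T) a x.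
Proof.
rewrite /phi /a -powR_sum; last by move=> x _; rewrite mulr_ge0 // sumr_ge0.
rewrite -big_distrr /=; congr (_ `^ (_ * _)).
have -> : \sum_(x in ~: T) \sum_(i < 2 ^ k | nu k i == x) q i =
    \sum_(i < 2 ^ k | nu k i \in ~: T) q i.
  rewrite (partition_big (fun i : 'I_(2 ^ k) => nu k i) (mem (~: T))) //.
  apply: eq_bigr => x xT; apply: eq_bigl => i.
  by case e: (nu k i == x); rewrite ?andbT ?andbF // (eqP e).
rewrite /zeta -q1 (bigID (fun i : 'I_(2 ^ k) => nu k i \in T)) /= addrC addrK.
by apply: eq_bigl => i; rewrite inE.
Qed.

Lemma sum_w (T : {set 'rV['F_2]_k}) : \sum_(Y : {set 'rV['F_2]_k} | Y \subset T) w Y = \prod_(x in ~: T) a x.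
Proof.
have H := @bigA_distr R 0 1 *%R +%R _
  (fun x => if x \in T then 1 - a x else 0) a.
have E : \prod_i ((if i \in T then 1 - a i else 0) + a i) =
          \prod_i (if i \in ~: T then a i else 1).
  by apply: eq_bigr => i _; rewrite inE; case: (i \in T); rewrite /= ?subrK ?add0r.
rewrite [RHS]big_mkcond -E H [LHS]big_mkcond /=; apply: eq_bigr => Y _.
case: (boolP (Y \subset T)) => YT.
  by rewrite /w; apply: eq_bigr => i _; case: ifP => // iY; rewrite (subsetP YT).
have [i iY iT] : exists2 i, i \in Y & i \notin T.
  by move/subsetPn: YT => [i iY iT]; exists i.
by rewrite (bigD1 i) //= iY (negPf iT) mul0r.
Qed.

Lemma phi_sum_g T : is_subspace T ->
  phi n eps q T = \sum_(U | is_subspace U && (U \subset T)) g U.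
Proof.
move=> sT; rewrite phi_prod -sum_w.
rewrite (eq_bigl (fun Y => cl Y \subset T)); last by move=> Y; rewrite cl_sub.
rewrite (partition_big (@cl k) (fun U => is_subspace U && (U \subset T))); last first.
  by move=> Y YT; rewrite cl_subspace YT.
apply: eq_bigr => U /andP[_ UT]; apply: eq_bigl => Y.
by case e: (cl Y == U); rewrite ?andbF ?andbT // (eqP e).
Qed.

Lemma main f T : is_subspace T -> (sdim T <= f)%N -> psi_fuel n eps q f T = g T.
Proof.
have key : forall T, is_subspace T -> phi n eps q T =
    g T + \sum_(U | is_subspace U && (U \subset T) && (sdim U < sdim T)%N) g U.
  move=> T0 sT0; rewrite phi_sum_g // (bigD1 T0) /=; last by rewrite sT0 subxx.
  congr (_ + _); apply: eq_bigl => U.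
  case sU: (is_subspace U); case UT: (U \subset T0) => //=.
  by rewrite sdim_lt.
elim: f T => [|f IH] T sT hd.
  move: hd; rewrite leqn0 => /eqP hd0.
  by rewrite /= key // big1 ?addr0 // => U; rewrite hd0 ltn0 andbF.
rewrite /= key //.
rewrite (eq_bigr (fun i : 'I_(sdim T) =>
   \sum_(U | is_subspace U && (sdim U == i) && (U \subset T)) g U)); last first.
  move=> i _; apply: eq_bigr => U /andP[/andP[sU /eqP dU] _]; apply: IH => //.
  by rewrite dU -ltnS (leq_trans (ltn_ord i) hd).
by rewrite sum_ord_dim addrK.
Qed.

End Main.

Theorem lemma1 (R : realType) (k n : nat) (eps : R) (q : 'I_(2 ^ k) -> R) :
  (1 <= k)%N -> (1 <= n)%N -> 0 <= eps -> eps < 1 ->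
  (forall i, 0 <= q i) -> \sum_(i < 2 ^ k) q i = 1 ->
  forall S : {set 'rV['F_2]_k}, is_subspace S -> 0 <= psi n eps q S.
Proof.
move=> _ _ e0 e1 q0 q1 S sS.
rewrite /psi (@main R k n eps q q0 q1 _ S sS (leqnn _)).
exact: (@g_ge0 R k n eps q e0 e1 q0 S).
Qed.
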